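(* For every set $X$, $\mathrm{Aut}(\overline{\mathcal{PI}^{\ast}}_X)\cong\mathcal{S}_X$, the symmetric group on $X$.
   Context: Let $X'=\{x':x\in X\}$ be a disjoint copy of $X$. $\overline{\mathcal{PI}^{\ast}}_X$ is the set of partitions of $X\cup X'$ each of whose blocks is a singleton (point) or a generalised line (a set meeting both $X$ and $X'$), with product $\circ$: $\alpha\circ\beta$ has as generalised lines exactly the sets $A\cup D'$ such that $A\cup B'$ is a generalised line of $\alpha$ and $B\cup D'$ is a generalised line of $\beta$ (same $B\subseteq X$), all other elements being points. $\mathrm{Aut}$ denotes the automorphism group. *)

(* Defs.v *)
(* The partition monoid PI*_X of the paper.
   X' is modelled by the right summand of X + X: x is [inl x], x' is [inr x]. *)

(* A partition of X ∪ X' is given by its equivalence relation ("same block").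
   Every block is a singleton (point) or meets both X and X' (generalised line). *)
Record PI (X : Type) := mkPI {
  prel : X + X -> X + X -> Prop;
  prel_refl : forall u, prel u u;
  prel_sym : forall u v, prel u v -> prel v u;
  prel_trans : forall u v w, prel u v -> prel v w -> prel u w;
  prel_block : forall u v, prel u v -> u <> v ->
      (exists x, prel u (inl x)) /\ (exists y, prel u (inr y))
}.
Arguments prel {X} _ _ _.

Section Product.
Variables (X : Type) (a b : PI X).

(* The alpha-block of p' is a generalised line A ∪ B', the beta-block of q is a
   generalised line B ∪ D', with the same B. *)
Definition plink (p q : X) : Prop :=
  (forall y, prel a (inr p) (inr y) <-> prel b (inl q) (inl y)) /\
  (exists x, prel a (inr p) (inl x)) /\
  (exists d, prel b (inl q) (inr d)).

(* membership in A ∪ D' *)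
Definition pin (p q : X) (u : X + X) : Prop :=
  match u with
  | inl x => prel a (inr p) (inl x)
  | inr d => prel b (inl q) (inr d)
  end.

Definition prod_rel (u v : X + X) : Prop :=
  u = v \/ exists p q, plink p q /\ pin p q u /\ pin p q v.

Lemma pin_transfer p q p' q' v :
  plink p q -> plink p' q' -> pin p q v -> pin p' q' v ->
  forall w, pin p' q' w -> pin p q w.
Proof.
  intros [L1 _] [L2 _] H1 H2.
  assert (Hb : prel a (inr p) (inr p') /\ prel b (inl q) (inl q')).
  { destruct v as [x|d]; simpl in *.
    - assert (Ha : prel a (inr p) (inr p')).
      { apply prel_trans with (inl x); auto. apply prel_sym; auto. }
      split; auto.
      apply prel_trans with (inl p'). apply L1; auto.
      apply prel_sym, L2, prel_refl.
    - assert (Hq : prel b (inl q) (inl q')).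
      { apply prel_trans with (inr d); auto. apply prel_sym; auto. }
      split; auto. apply L1.
      apply prel_trans with (inl q'); auto. apply L2, prel_refl. }
  destruct Hb as [Ha Hq].
  intros [x|d]; simpl; intro H.
  - apply prel_trans with (inr p'); auto.
  - apply prel_trans with (inl q'); auto.
Qed.

Lemma prod_refl u : prod_rel u u.
Proof. left; reflexivity. Qed.

Lemma prod_sym u v : prod_rel u v -> prod_rel v u.
Proof.
  intros [->|[p [q [L [H1 H2]]]]]; [left; reflexivity|].
  right; exists p, q; auto.
Qed.

Lemma prod_trans u v w : prod_rel u v -> prod_rel v w -> prod_rel u w.
Proof.
  intros [->|[p [q [L [H1 H2]]]]]; auto.
  intros [<-|[p' [q' [L' [H3 H4]]]]].
  - right; exists p, q; auto.
  - right; exists p, q; split; [exact L|split; [exact H1|]].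
    apply (pin_transfer p q p' q' v); auto.
Qed.

Lemma prod_block u v : prod_rel u v -> u <> v ->
  (exists x, prod_rel u (inl x)) /\ (exists y, prod_rel u (inr y)).
Proof.
  intros [->|[p [q [L [H1 H2]]]]] Hne; [congruence|].
  destruct L as [L0 [[x Hx] [d Hd]]].
  split.
  - exists x; right; exists p, q; split; [split; [exact L0|split; eauto]|split; auto].
  - exists d; right; exists p, q; split; [split; [exact L0|split; eauto]|split; auto].
Qed.

End Product.

Definition pcomp {X : Type} (a b : PI X) : PI X :=
  mkPI X (prod_rel X a b) (prod_refl X a b) (prod_sym X a b)
       (prod_trans X a b) (prod_block X a b).

Definition is_bijection {A B : Type} (f : A -> B) : Prop :=
  exists g : B -> A, (forall x, g (f x) = x) /\ (forall y, f (g y) = y).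

Definition is_automorphism {X : Type} (phi : PI X -> PI X) : Prop :=
  is_bijection phi /\ forall a b, phi (pcomp a b) = pcomp (phi a) (phi b).

(* Main.v *)
Require Import Defs.
From Stdlib Require Import Classical ClassicalEpsilon FunctionalExtensionality PropExtensionality ProofIrrelevance.

Definition inAB {X : Type} (A B : X -> Prop) (u : X + X) : Prop :=
  match u with inl x => A x | inr y => B y end.

Definition hasline {X : Type} (a : PI X) (A B : X -> Prop) : Prop :=
  (exists x, A x) /\ (exists y, B y) /\ exists u, forall t, prel a u t <-> inAB A B t.

Lemma pred_eq {X : Type} (A B : X -> Prop) : (forall x, A x <-> B x) -> A = B.
Proof. intro H; extensionality x; apply propositional_extensionality; auto. Qed.

Lemma inAB_eq {X : Type} (A B C D : X -> Prop) :
  (forall t, inAB A B t <-> inAB C D t) -> A = C /\ B = D.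
Proof.
  intro H; split; apply pred_eq; intro x; [exact (H (inl x)) | exact (H (inr x))].
Qed.

Lemma PI_eq {X : Type} (a b : PI X) : (forall u v, prel a u v <-> prel b u v) -> a = b.
Proof.
  destruct a as [r1 a1 a2 a3 a4], b as [r2 b1 b2 b3 b4]; simpl; intro H.
  assert (r1 = r2) by (extensionality u; extensionality v; apply propositional_extensionality; auto).
  subst r2. f_equal; apply proof_irrelevance.
Qed.

Lemma hasline_mem {X : Type} (a : PI X) A B t1 t2 :
  hasline a A B -> inAB A B t1 -> inAB A B t2 -> prel a t1 t2.
Proof.
  intros [_ [_ [w Hw]]] H1 H2. apply (prel_trans _ a) with w.
  - apply (prel_sym _ a), Hw; auto.
  - apply Hw; auto.
Qed.

Lemma hasline_blk {X : Type} (a : PI X) A B t :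
  hasline a A B -> inAB A B t -> forall s, prel a t s <-> inAB A B s.
Proof.
  intros HL Ht s. split; intro H.
  - destruct HL as [_ [_ [w Hw]]]. apply Hw. apply (prel_trans _ a) with t; auto.
    apply Hw; auto.
  - apply (hasline_mem a A B); auto.
Qed.

Lemma hasline_uniq {X : Type} (a : PI X) A B C D t :
  hasline a A B -> hasline a C D -> inAB A B t -> inAB C D t -> A = C /\ B = D.
Proof.
  intros H1 H2 T1 T2. apply inAB_eq. intro s.
  rewrite <- (hasline_blk a A B t H1 T1), <- (hasline_blk a C D t H2 T2). tauto.
Qed.

Lemma PI_ext1 {X : Type} (a b : PI X) :
  (forall A B, hasline a A B -> hasline b A B) -> forall u v, prel a u v -> prel b u v.
Proof.
  intros H u v Huv. destruct (classic (u = v)) as [<-|Hne]; [apply prel_refl|].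
  destruct (prel_block _ a u v Huv Hne) as [[x Hx] [y Hy]].
  assert (HL : hasline a (fun x => prel a u (inl x)) (fun y => prel a u (inr y))).
  { split; [eauto|split; [eauto|]]. exists u. intros [z|z]; simpl; tauto. }
  apply H in HL. apply (hasline_mem b _ _ u v HL).
  - destruct u; simpl; apply prel_refl.
  - destruct v; simpl; auto.
Qed.

Lemma PI_ext {X : Type} (a b : PI X) :
  (forall A B, hasline a A B <-> hasline b A B) -> a = b.
Proof.
  intro H. apply PI_eq. intros u v; split; apply PI_ext1; intros A B; apply H.
Qed.

Lemma pin_blk {X : Type} (a b : PI X) p q v w :
  plink X a b p q -> pin X a b p q v -> (prod_rel X a b v w <-> pin X a b p q w).
Proof.
  intros L Hv; split.
  - intros [<-|[p' [q' [L' [H1 H2]]]]]; auto.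
    exact (pin_transfer X a b p q p' q' v L L' Hv H1 w H2).
  - intro Hw. right. exists p, q. auto.
Qed.

Lemma hasline_comp {X : Type} (a b : PI X) A D :
  hasline (pcomp a b) A D <-> exists B, hasline a A B /\ hasline b B D.
Proof.
  split.
  - intros [[x Ax] [[d Dd] [u Hu]]]. simpl in Hu.
    assert (Hx : prod_rel X a b u (inl x)) by (apply Hu; exact Ax).
    assert (Hd : prod_rel X a b u (inr d)) by (apply Hu; exact Dd).
    assert (Hxd : prod_rel X a b (inl x) (inr d)).
    { apply prod_trans with u; auto. apply prod_sym; auto. }
    destruct Hxd as [E|[p [q [L [P1 P2]]]]]; [discriminate|].
    assert (Hblk : forall t, inAB A D t <-> pin X a b p q t).
    { intro t. rewrite <- Hu, <- (pin_blk a b p q (inl x) t L P1). split; intro H.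
      - apply prod_trans with u; auto. apply prod_sym; auto.
      - apply prod_trans with (inl x); auto. }
    destruct L as [L1 [L2 L3]].
    exists (fun y => prel a (inr p) (inr y)). split.
    + split; [exists x; auto|split; [exists p; apply prel_refl|]].
      exists (inr p). intros [z|z]; simpl.
      * exact (iff_sym (Hblk (inl z))).
      * tauto.
    + split; [exists p; apply prel_refl|split; [exists d; auto|]].
      exists (inl q). intros [z|z]; simpl.
      * rewrite L1. tauto.
      * exact (iff_sym (Hblk (inr z))).
  - intros [B [HA HB]].
    pose proof HA as [[x Ax] [[y By] _]]. pose proof HB as [_ [[d Dd] _]].
    assert (Ha : forall s, prel a (inr y) s <-> inAB A B s) by (apply (hasline_blk a A B (inr y)); auto).
    assert (Hb : forall s, prel b (inl y) s <-> inAB B D s) by (apply (hasline_blk b B D (inl y)); auto).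
    assert (L : plink X a b y y).
    { split; [|split].
      - intro z. rewrite (Ha (inr z)), (Hb (inl z)). simpl. tauto.
      - exists x. apply Ha. auto.
      - exists d. apply Hb. auto. }
    split; [eauto|split; [eauto|]]. exists (inl x). simpl. intro t.
    rewrite (pin_blk a b y y (inl x) t L); [|simpl; apply Ha; auto].
    destruct t as [z|z]; simpl; [apply (Ha (inl z))|apply (Hb (inr z))].
Qed.

Lemma Zblock {X : Type} (u v : X + X) : u = v -> u <> v ->
  (exists x, u = inl x) /\ (exists y, u = inr y).
Proof. intros H1 H2; contradiction. Qed.

Definition Zr (X : Type) : PI X :=
  mkPI X (fun u v => u = v) (fun u => eq_refl) (fun u v H => eq_sym H)
       (fun u v w H1 H2 => eq_trans H1 H2) Zblock.

Lemma hasline_Z {X : Type} A B : ~ hasline (Zr X) A B.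
Proof.
  intros [[x Ax] [[y By] [u Hu]]]. simpl in Hu.
  assert (E1 : u = inl x) by (apply Hu; auto).
  assert (E2 : u = inr y) by (apply Hu; auto). congruence.
Qed.

Lemma nonzero_line {X : Type} (a : PI X) : a <> Zr X -> exists A B, hasline a A B.
Proof.
  intro H. apply NNPP; intro N. apply H, PI_ext. intros A B; split; intro HL.
  - exfalso; apply N; eauto.
  - exfalso; apply (hasline_Z A B HL).
Qed.

Lemma compZl {X : Type} (b : PI X) : pcomp (Zr X) b = Zr X.
Proof.
  apply PI_ext; intros A B; rewrite hasline_comp; split.
  - intros [C [H _]]. exfalso; apply (hasline_Z _ _ H).
  - intro H; exfalso; apply (hasline_Z _ _ H).
Qed.

Lemma compZr {X : Type} (b : PI X) : pcomp b (Zr X) = Zr X.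
Proof.
  apply PI_ext; intros A B; rewrite hasline_comp; split.
  - intros [C [_ H]]. exfalso; apply (hasline_Z _ _ H).
  - intro H; exfalso; apply (hasline_Z _ _ H).
Qed.

Definition Lrel {X : Type} (A B : X -> Prop) (u v : X + X) : Prop :=
  u = v \/ (inAB A B u /\ inAB A B v /\ (exists x, A x) /\ (exists y, B y)).

Lemma Lrefl {X : Type} (A B : X -> Prop) u : Lrel A B u u.
Proof. left; reflexivity. Qed.
Lemma Lsym {X : Type} (A B : X -> Prop) u v : Lrel A B u v -> Lrel A B v u.
Proof. unfold Lrel; intros [->|H]; [left|right]; tauto. Qed.
Lemma Ltrans {X : Type} (A B : X -> Prop) u v w : Lrel A B u v -> Lrel A B v w -> Lrel A B u w.
Proof. unfold Lrel; intros [->|H]; [tauto|]. intros [<-|H']; right; tauto. Qed.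
Lemma Lblock {X : Type} (A B : X -> Prop) u v : Lrel A B u v -> u <> v ->
  (exists x, Lrel A B u (inl x)) /\ (exists y, Lrel A B u (inr y)).
Proof.
  intros [E|[Hu [Hv [[x Ax] [y By]]]]] Hne; [contradiction|].
  split; [exists x|exists y]; right; simpl; repeat split; eauto.
Qed.

Definition Lin {X : Type} (A B : X -> Prop) : PI X :=
  mkPI X (Lrel A B) (Lrefl A B) (Lsym A B) (Ltrans A B) (Lblock A B).

Lemma hasline_L {X : Type} (A B C D : X -> Prop) :
  hasline (Lin A B) C D <-> (exists x, A x) /\ (exists y, B y) /\ C = A /\ D = B.
Proof.
  split.
  - intros [[x Cx] [[y Dy] [u Hu]]]. simpl in Hu.
    assert (H1 : Lrel A B u (inl x)) by (apply Hu; auto).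
    assert (H2 : Lrel A B u (inr y)) by (apply Hu; auto).
    assert (Hin : inAB A B u /\ (exists x, A x) /\ (exists y, B y)).
    { destruct H1 as [E|H1]; [|tauto]. subst u.
      destruct H2 as [E|H2]; [discriminate|tauto]. }
    destruct Hin as [Hin [HA HB]]. split; [auto|split; [auto|]].
    assert (K : forall t, inAB C D t <-> inAB A B t).
    { intro t. rewrite <- Hu. unfold Lrel. split; [intros [<-|H]; tauto|tauto]. }
    destruct (inAB_eq _ _ _ _ K); auto.
  - intros [[x Ax] [[y By] [-> ->]]].
    split; [eauto|split; [eauto|]]. exists (inl x). simpl. unfold Lrel. intro t; split.
    + intros [<-|H]; simpl; tauto.
    + intro H; right; simpl; repeat split; eauto.
Qed.

Definition sw {X : Type} (A : X -> Prop) (a : PI X) (D : X -> Prop) : PI X :=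
  pcomp (pcomp (Lin A A) a) (Lin D D).

Lemma hasline_sw {X : Type} A (a : PI X) D C F :
  hasline (sw A a D) C F <-> hasline a A D /\ C = A /\ F = D.
Proof.
  unfold sw. rewrite hasline_comp. split.
  - intros [B2 [H1 H2]]. rewrite hasline_comp in H1. destruct H1 as [B1 [H11 H12]].
    apply hasline_L in H11. apply hasline_L in H2.
    destruct H11 as [_ [_ [-> ->]]]. destruct H2 as [_ [_ [-> ->]]]. auto.
  - intros [Ha [-> ->]]. pose proof Ha as [HA [HD _]]. exists D. split.
    + rewrite hasline_comp. exists A. split; auto. apply hasline_L; auto.
    + apply hasline_L; auto.
Qed.

Lemma detect {X : Type} (a : PI X) A D : hasline a A D <-> sw A a D <> Zr X.
Proof.
  split.
  - intros H E. apply (hasline_Z A D). rewrite <- E. apply hasline_sw; auto.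
  - intro H. destruct (nonzero_line _ H) as [C [F HL]]. apply hasline_sw in HL. tauto.
Qed.

Lemma LL_idem {X : Type} (B : X -> Prop) : pcomp (Lin B B) (Lin B B) = Lin B B.
Proof.
  apply PI_ext; intros C D. rewrite hasline_comp, hasline_L. split.
  - intros [M [H1 H2]]. apply hasline_L in H1, H2. intuition congruence.
  - intros [HB [_ [-> ->]]]. exists B. split; apply hasline_L; auto.
Qed.

Definition Pm {X : Type} (e : PI X) : Prop :=
  e <> Zr X /\ pcomp e e = e /\
  forall a, pcomp (pcomp e a) e = Zr X \/ pcomp (pcomp e a) e = e.

Lemma P_L {X : Type} (B : X -> Prop) : (exists x, B x) -> Pm (Lin B B).
Proof.
  intro HB. split; [|split; [apply LL_idem|]].
  - intro E. apply (hasline_Z B B). rewrite <- E. apply hasline_L; auto.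
  - intro a. fold (sw B a B). destruct (classic (hasline a B B)) as [H|H]; [right|left];
      apply PI_ext; intros C D; rewrite hasline_sw.
    + rewrite hasline_L. intuition.
    + split; [tauto|intro K; exfalso; exact (hasline_Z _ _ K)].
Qed.

Lemma P_inv {X : Type} (e : PI X) : Pm e -> exists B, (exists x, B x) /\ e = Lin B B.
Proof.
  intros [Hnz [Hid Hs]]. destruct (nonzero_line _ Hnz) as [A [B HAB]].
  pose proof HAB as [[x Ax] [[y By] _]].
  assert (Hsw : hasline (pcomp (pcomp e (Lin B A)) e) A B).
  { rewrite hasline_comp. exists A. split; auto. rewrite hasline_comp. exists B. split; auto.
    apply hasline_L; repeat split; eauto. }
  assert (Hse : pcomp (pcomp e (Lin B A)) e = e).
  { destruct (Hs (Lin B A)) as [E|E]; auto. rewrite E in Hsw. exfalso; exact (hasline_Z _ _ Hsw). }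
  assert (Hall : forall C D, hasline e C D -> C = A /\ D = B).
  { intros C D H. rewrite <- Hse in H. rewrite hasline_comp in H. destruct H as [M [H1 H2]].
    rewrite hasline_comp in H1. destruct H1 as [N [H11 H12]]. apply hasline_L in H12.
    destruct H12 as [_ [_ [-> ->]]].
    destruct (hasline_uniq e C B A B (inr y) H11 HAB) as [E1 _]; simpl; auto.
    destruct (hasline_uniq e A D A B (inl x) H2 HAB) as [_ E2]; simpl; auto. }
  assert (EAB : A = B).
  { rewrite <- Hid in HAB. rewrite hasline_comp in HAB. destruct HAB as [M [H1 H2]].
    apply Hall in H1. apply Hall in H2. intuition congruence. }
  subst B. exists A. split; eauto. apply PI_ext. intros C D. rewrite hasline_L. split.
  - intro H. apply Hall in H. intuition eauto.
  - intros [_ [_ [-> ->]]]. auto.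
Qed.

Definition L2rel {X : Type} (B C : X -> Prop) (u v : X + X) : Prop :=
  u = v \/ (inAB B B u /\ inAB B B v) \/ (inAB C C u /\ inAB C C v).

Lemma inAB_both {X : Type} (B C : X -> Prop) (Hd : forall x, B x -> C x -> False) t :
  inAB B B t -> inAB C C t -> False.
Proof. destruct t; simpl; eauto. Qed.

Definition L2 {X : Type} (B C : X -> Prop) (HB : exists x, B x) (HC : exists x, C x)
  (Hd : forall x, B x -> C x -> False) : PI X.
Proof.
  refine (mkPI X (L2rel B C) _ _ _ _); unfold L2rel.
  - intros; left; reflexivity.
  - intros u v [->|[H|H]]; [left; reflexivity|right; left; tauto|right; right; tauto].
  - intros u v w [->|[H|H]] [<-|[H'|H']]; auto;
      try (exfalso; apply (inAB_both B C Hd v); tauto); tauto.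
  - intros u v [E|[H|H]] Hne; [contradiction| |].
    + destruct HB as [x Bx]. split; [exists x|exists x]; right; left; simpl; tauto.
    + destruct HC as [x Cx]. split; [exists x|exists x]; right; right; simpl; tauto.
Defined.

Lemma hasline_L2 {X : Type} B C HB HC Hd (E F : X -> Prop) :
  hasline (L2 B C HB HC Hd) E F -> (E = B /\ F = B) \/ (E = C /\ F = C).
Proof.
  intros [[x Ex] [[y Fy] [u Hu]]]. simpl in Hu. unfold L2rel in Hu.
  assert (H1 := proj2 (Hu (inl x)) Ex). assert (H2 := proj2 (Hu (inr y)) Fy).
  assert (Hin : inAB B B u \/ inAB C C u).
  { destruct H1 as [->|H1]; [|tauto]. destruct H2 as [E0|H2]; [discriminate|tauto]. }
  destruct Hin as [Hin|Hin]; [left|right].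
  - assert (K : forall t, inAB E F t <-> inAB B B t).
    { intro t; rewrite <- Hu; split.
      - intros [<-|[H|H]]; try tauto. exfalso; apply (inAB_both B C Hd u); tauto.
      - tauto. }
    destruct (inAB_eq _ _ _ _ K); auto.
  - assert (K : forall t, inAB E F t <-> inAB C C t).
    { intro t; rewrite <- Hu; split.
      - intros [<-|[H|H]]; try tauto. exfalso; apply (inAB_both B C Hd u); tauto.
      - tauto. }
    destruct (inAB_eq _ _ _ _ K); auto.
Qed.

Lemma hasline_L2B {X : Type} B C HB HC Hd : hasline (@L2 X B C HB HC Hd) B B.
Proof.
  pose proof HB as [x Bx]. split; [eauto|split; [eauto|]]. exists (inl x). simpl. unfold L2rel.
  intro t; split.
  - intros [<-|[H|H]]; simpl; try tauto. exfalso; apply (inAB_both B C Hd (inl x)); simpl; tauto.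
  - intro H; right; left; simpl; tauto.
Qed.

Lemma hasline_L2C {X : Type} B C HB HC Hd : hasline (@L2 X B C HB HC Hd) C C.
Proof.
  pose proof HC as [x Cx]. split; [eauto|split; [eauto|]]. exists (inl x). simpl. unfold L2rel.
  intro t; split.
  - intros [<-|[H|H]]; simpl; try tauto. exfalso; apply (inAB_both B C Hd (inl x)); simpl; tauto.
  - intro H; right; right; simpl; tauto.
Qed.

Definition DE {X : Type} (e1 e2 : PI X) : Prop :=
  exists a, pcomp e1 a = e1 /\ pcomp a e2 = e2.

Lemma DE_L {X : Type} (B C : X -> Prop) : (exists x, B x) -> (exists x, C x) ->
  (DE (Lin B B) (Lin C C) <-> B = C \/ (forall x, B x -> C x -> False)).
Proof.
  intros HB HC. split.
  - intros [a [H1 H2]].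
    assert (Ha : hasline a B B).
    { assert (K : hasline (Lin B B) B B) by (apply hasline_L; auto).
      rewrite <- H1, hasline_comp in K. destruct K as [M [K1 K2]].
      apply hasline_L in K1. destruct K1 as [_ [_ [_ ->]]]. auto. }
    assert (Hc : hasline a C C).
    { assert (K : hasline (Lin C C) C C) by (apply hasline_L; auto).
      rewrite <- H2, hasline_comp in K. destruct K as [M [K1 K2]].
      apply hasline_L in K2. destruct K2 as [_ [_ [-> _]]]. auto. }
    destruct (classic (exists x, B x /\ C x)) as [[x [Bx Cx]]|N].
    + left. destruct (hasline_uniq a B B C C (inl x) Ha Hc); auto.
    + right. intros x Bx Cx; apply N; eauto.
  - intros [<-|Hd].
    + exists (Lin B B). split; apply LL_idem.
    + exists (L2 B C HB HC Hd). split; apply PI_ext; intros E F; rewrite hasline_comp; split.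
      * intros [M [K1 K2]]. apply hasline_L in K1. destruct K1 as [_ [_ [-> ->]]].
        apply hasline_L2 in K2. destruct K2 as [[_ ->]|[E1 _]].
        -- apply hasline_L; auto.
        -- subst C. exfalso. destruct HB as [x Bx]. eauto.
      * intro K. exists B. pose proof K as K'. apply hasline_L in K'.
        destruct K' as [_ [_ [-> ->]]]. split; auto. apply hasline_L2B.
      * intros [M [K1 K2]]. apply hasline_L in K2. destruct K2 as [_ [_ [-> ->]]].
        apply hasline_L2 in K1. destruct K1 as [[_ E1]|[-> _]].
        -- subst C. exfalso. destruct HB as [x Bx]. eauto.
        -- apply hasline_L; auto.
      * intro K. exists C. pose proof K as K'. apply hasline_L in K'.
        destruct K' as [_ [_ [-> ->]]]. split; auto. apply hasline_L2C.
Qed.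

Lemma L_inj {X : Type} (B C : X -> Prop) : (exists x, B x) -> Lin B B = Lin C C -> B = C.
Proof.
  intros HB E. assert (K : hasline (Lin B B) B B) by (apply hasline_L; auto).
  rewrite E in K. apply hasline_L in K. tauto.
Qed.

Definition Disj {X : Type} (e1 e2 : PI X) : Prop := DE e1 e2 /\ e1 <> e2.

Lemma Disj_L {X : Type} (B C : X -> Prop) : (exists x, B x) -> (exists x, C x) ->
  (Disj (Lin B B) (Lin C C) <-> (forall x, B x -> C x -> False)).
Proof.
  intros HB HC. unfold Disj. rewrite DE_L; auto. split.
  - intros [[<-|H] Hne]; [exfalso; auto|auto].
  - intro Hd. split; auto. intro E. apply L_inj in E; auto. subst C.
    destruct HB as [x Bx]; eauto.
Qed.

Definition Sub {X : Type} (e1 e2 : PI X) : Prop :=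
  forall e, Pm e -> Disj e2 e -> Disj e1 e.

Definition single {X : Type} (x : X) : X -> Prop := fun z => z = x.
Definition Sg {X : Type} (x : X) : PI X := Lin (single x) (single x).

Lemma single_ne {X : Type} (x : X) : exists z, single x z.
Proof. exists x; reflexivity. Qed.

Lemma Sub_L {X : Type} (B C : X -> Prop) : (exists x, B x) -> (exists x, C x) ->
  (Sub (Lin B B) (Lin C C) <-> (forall x, B x -> C x)).
Proof.
  intros HB HC. split.
  - intros H x Bx. apply NNPP; intro nC.
    assert (K : Disj (Lin B B) (Sg x)).
    { apply H; [apply P_L, single_ne|]. unfold Sg. apply Disj_L; auto; [apply single_ne|].
      intros z Cz E; unfold single in E; subst; auto. }
    unfold Sg in K. rewrite Disj_L in K; auto; [|apply single_ne]. apply (K x Bx); reflexivity.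
  - intros H e Pe HD. destruct (P_inv e Pe) as [D [HD' ->]].
    rewrite Disj_L in HD |- *; auto. intros x Bx Dx; eauto.
Qed.

Definition Atom {X : Type} (e : PI X) : Prop := Pm e /\ forall e', Pm e' -> Sub e' e -> e' = e.

Lemma Atom_inv {X : Type} (e : PI X) : Atom e -> exists x, e = Sg x.
Proof.
  intros [Pe Hmin]. destruct (P_inv e Pe) as [C [[x Cx] ->]]. exists x.
  symmetry. apply Hmin; [apply P_L, single_ne|]. unfold Sg. apply Sub_L; eauto; [apply single_ne|].
  intros z E; unfold single in E; subst; auto.
Qed.

Lemma Atom_Sg {X : Type} (x : X) : Atom (Sg x).
Proof.
  split; [apply P_L, single_ne|]. intros e' Pe' HS.
  destruct (P_inv e' Pe') as [D [[w Dw] ->]]. unfold Sg in *.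
  rewrite Sub_L in HS; eauto; [|apply single_ne].
  assert (ED : D = single x).
  { apply pred_eq; intro z; split; [apply HS|].
    intro E; unfold single in E; subst z. pose proof (HS w Dw) as E. unfold single in E. subst; auto. }
  rewrite ED; reflexivity.
Qed.

Lemma Sg_inj {X : Type} (x y : X) : Sg x = Sg y -> x = y.
Proof.
  intro E. apply L_inj in E; [|apply single_ne].
  assert (K : single x x) by reflexivity. rewrite E in K. exact K.
Qed.

Definition isAut {X : Type} (phi g : PI X -> PI X) : Prop :=
  (forall a, g (phi a) = a) /\ (forall b, phi (g b) = b) /\
  (forall a b, phi (pcomp a b) = pcomp (phi a) (phi b)).

Lemma isAut_sym {X : Type} (phi g : PI X -> PI X) : isAut phi g -> isAut g phi.
Proof.
  intros [H1 [H2 H3]]. split; [auto|split; [auto|]]. intros a b.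
  transitivity (g (pcomp (phi (g a)) (phi (g b)))).
  - rewrite !H2; reflexivity.
  - rewrite <- H3, H1; reflexivity.
Qed.

Lemma aut_Z {X : Type} (phi g : PI X -> PI X) : isAut phi g -> phi (Zr X) = Zr X.
Proof.
  intros [H1 [H2 H3]].
  transitivity (phi (pcomp (Zr X) (g (Zr X)))).
  - rewrite compZl; reflexivity.
  - rewrite H3, H2; apply compZr.
Qed.

Lemma P_pres {X : Type} (phi g : PI X -> PI X) e : isAut phi g -> Pm e -> Pm (phi e).
Proof.
  intros HA [Hnz [Hid Hs]]. pose proof HA as [H1 [H2 H3]].
  assert (pZ := aut_Z phi g HA). assert (gZ := aut_Z g phi (isAut_sym _ _ HA)).
  split; [|split].
  - intro E. apply Hnz. rewrite <- (H1 e), E, gZ; reflexivity.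
  - rewrite <- H3, Hid; reflexivity.
  - intro a. destruct (Hs (g a)) as [E|E]; [left|right]; rewrite <- (H2 a), <- !H3, E; auto.
Qed.

Lemma DE_pres {X : Type} (phi g : PI X -> PI X) e1 e2 : isAut phi g -> DE e1 e2 -> DE (phi e1) (phi e2).
Proof.
  intros [H1 [H2 H3]] [a [E1 E2]]. exists (phi a). rewrite <- !H3, E1, E2. auto.
Qed.

Lemma Disj_pres {X : Type} (phi g : PI X -> PI X) e1 e2 : isAut phi g -> Disj e1 e2 -> Disj (phi e1) (phi e2).
Proof.
  intros HA [HD Hne]. split; [apply (DE_pres phi g); auto|].
  intro E. apply Hne. destruct HA as [H1 _]. rewrite <- (H1 e1), E, H1; reflexivity.
Qed.

Lemma Sub_pres {X : Type} (phi g : PI X -> PI X) e1 e2 : isAut phi g -> Sub e1 e2 -> Sub (phi e1) (phi e2).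
Proof.
  intros HA HS e Pe HD. pose proof HA as [H1 [H2 H3]].
  rewrite <- (H2 e). apply (Disj_pres phi g); auto. apply HS.
  - apply (P_pres g phi); auto. apply isAut_sym; auto.
  - rewrite <- (H1 e2). apply (Disj_pres g phi); auto. apply isAut_sym; auto.
Qed.

Lemma Atom_pres {X : Type} (phi g : PI X -> PI X) e : isAut phi g -> Atom e -> Atom (phi e).
Proof.
  intros HA [Pe Hmin]. pose proof HA as [H1 [H2 H3]]. assert (HA' := isAut_sym _ _ HA).
  split; [apply (P_pres phi g); auto|]. intros e' Pe' HS.
  rewrite <- (H2 e'), (Hmin (g e')); auto.
  - apply (P_pres g phi); auto.
  - rewrite <- (H1 e). apply (Sub_pres g phi); auto.
Qed.

Definition smap {X : Type} (g : X -> X) (u : X + X) : X + X :=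
  match u with inl x => inl (g x) | inr y => inr (g y) end.

Lemma smapK {X : Type} (f g : X -> X) (H : forall y, f (g y) = y) u : smap f (smap g u) = u.
Proof. destruct u; simpl; rewrite H; reflexivity. Qed.

Definition relab {X : Type} (f g : X -> X) (H1 : forall x, g (f x) = x)
  (H2 : forall y, f (g y) = y) (a : PI X) : PI X.
Proof.
  refine (mkPI X (fun u v => prel a (smap g u) (smap g v)) _ _ _ _).
  - intros; apply prel_refl.
  - intros u v H; apply prel_sym; auto.
  - intros u v w H H'; eapply prel_trans; eauto.
  - intros u v H Hne.
    assert (Hne' : smap g u <> smap g v).
    { intro E. apply Hne. rewrite <- (smapK f g H2 u), <- (smapK f g H2 v), E. reflexivity. }
    destruct (prel_block _ a _ _ H Hne') as [[x Hx] [y Hy]].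
    split; [exists (f x)|exists (f y)]; simpl; rewrite H1; auto.
Defined.

Lemma inAB_smap {X : Type} (A B : X -> Prop) (f : X -> X) t :
  inAB (fun x => A (f x)) (fun x => B (f x)) t <-> inAB A B (smap f t).
Proof. destruct t; simpl; tauto. Qed.

Lemma relab_spec {X : Type} f g H1 H2 (a : PI X) A B :
  hasline (relab f g H1 H2 a) A B <-> hasline a (fun x => A (f x)) (fun x => B (f x)).
Proof.
  split.
  - intros [[x Ax] [[y By] [u Hu]]]. simpl in Hu.
    split; [exists (g x); rewrite H2; auto|split; [exists (g y); rewrite H2; auto|]].
    exists (smap g u). intro t. rewrite inAB_smap, <- Hu, (smapK g f H1). tauto.
  - intros [[x Ax] [[y By] [u Hu]]].
    split; [exists (f x); auto|split; [exists (f y); auto|]].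
    exists (smap f u). simpl. intro t. rewrite (smapK g f H1), Hu, inAB_smap, (smapK f g H2). tauto.
Qed.

Definition Phi {X : Type} (f : X -> X) : PI X -> PI X :=
  match excluded_middle_informative (is_bijection f) with
  | left H => let s := constructive_indefinite_description _ H in
              relab f (proj1_sig s) (proj1 (proj2_sig s)) (proj2 (proj2_sig s))
  | right _ => fun a => a
  end.

Lemma Phi_spec {X : Type} (f : X -> X) (a : PI X) A B : is_bijection f ->
  hasline (Phi f a) A B <-> hasline a (fun x => A (f x)) (fun x => B (f x)).
Proof.
  intro Hf. unfold Phi. destruct (excluded_middle_informative _) as [H|H]; [|contradiction].
  apply relab_spec.
Qed.

Lemma surj_part {X : Type} (phi : PI X -> PI X) :
  is_automorphism phi -> exists f, is_bijection f /\ Phi f = phi.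
Proof.
  intros [[g [Hgp Hpg]] Hm].
  assert (HA : isAut phi g) by (split; [auto|split; auto]).
  assert (HA' := isAut_sym _ _ HA).
  assert (fex : forall x, exists y, phi (Sg x) = Sg y)
    by (intro x; apply Atom_inv, (Atom_pres phi g); auto; apply Atom_Sg).
  assert (hex : forall x, exists y, g (Sg x) = Sg y)
    by (intro x; apply Atom_inv, (Atom_pres g phi); auto; apply Atom_Sg).
  set (f := fun x => proj1_sig (constructive_indefinite_description _ (fex x))).
  set (h := fun x => proj1_sig (constructive_indefinite_description _ (hex x))).
  assert (Hf : forall x, phi (Sg x) = Sg (f x))
    by (intro x; exact (proj2_sig (constructive_indefinite_description _ (fex x)))).
  assert (Hh : forall x, g (Sg x) = Sg (h x))
    by (intro x; exact (proj2_sig (constructive_indefinite_description _ (hex x)))).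
  clearbody f h.
  assert (fh : forall y, f (h y) = y).
  { intro y. apply Sg_inj. rewrite <- Hf, <- Hh, Hpg. reflexivity. }
  assert (hf : forall x, h (f x) = x).
  { intro x. apply Sg_inj. rewrite <- Hh, <- Hf, Hgp. reflexivity. }
  assert (Hbij : is_bijection f) by (exists h; split; auto).
  assert (Claim : forall B, (exists x, B x) ->
            phi (Lin B B) = Lin (fun y => B (h y)) (fun y => B (h y))).
  { intros B HB. destruct (P_inv (phi (Lin B B))) as [C [HC E]].
    { apply (P_pres phi g); auto. apply P_L; auto. }
    rewrite E. assert (EC : C = fun y => B (h y)).
    { apply pred_eq; intro y. split.
      - intro Cy. assert (K : Sub (Sg y) (Lin C C)).
        { unfold Sg. apply Sub_L; auto; [apply single_ne|]. intros z Ez; unfold single in Ez; subst; auto. }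
        apply (Sub_pres g phi) in K; auto. rewrite Hh, <- E, Hgp in K. unfold Sg in K.
        rewrite Sub_L in K; auto; [|apply single_ne]. apply K. reflexivity.
      - intro By. assert (K : Sub (Sg (h y)) (Lin B B)).
        { unfold Sg. apply Sub_L; auto; [apply single_ne|]. intros z Ez; unfold single in Ez; subst; auto. }
        apply (Sub_pres phi g) in K; auto. rewrite Hf, fh, E in K. unfold Sg in K.
        rewrite Sub_L in K; auto; [|apply single_ne]. apply K. reflexivity. }
    rewrite EC; reflexivity. }
  exists f. split; auto. extensionality a. apply PI_ext. intros A D.
  rewrite Phi_spec by auto.
  destruct (classic (exists x, A x)) as [nA|nA];
    [|split; intros [[x Hx] _]; exfalso; apply nA; eauto].
  destruct (classic (exists x, D x)) as [nD|nD];
    [|split; intros [_ [[x Hx] _]]; exfalso; apply nD; eauto].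
  assert (KA : phi (Lin (fun x => A (f x)) (fun x => A (f x))) = Lin A A).
  { rewrite Claim.
    - f_equal; apply pred_eq; intro; rewrite fh; tauto.
    - destruct nA as [x Ax]; exists (h x); rewrite fh; auto. }
  assert (KD : phi (Lin (fun x => D (f x)) (fun x => D (f x))) = Lin D D).
  { rewrite Claim.
    - f_equal; apply pred_eq; intro; rewrite fh; tauto.
    - destruct nD as [x Dx]; exists (h x); rewrite fh; auto. }
  rewrite (detect a), (detect (phi a)).
  assert (KS : phi (sw (fun x => A (f x)) a (fun x => D (f x))) = sw A (phi a) D).
  { unfold sw. rewrite !Hm, KA, KD. reflexivity. }
  rewrite <- KS. assert (pZ := aut_Z phi g HA). assert (gZ := aut_Z g phi HA').
  split; intros H E; apply H.
  - rewrite <- (Hgp (sw _ a _)), E, gZ. reflexivity.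
  - rewrite E, pZ. reflexivity.
Qed.

Theorem mainTheorem16 (X : Type) :
  exists Phi : (X -> X) -> (PI X -> PI X),
    (forall f, is_bijection f -> is_automorphism (Phi f)) /\
    (forall f g, is_bijection f -> is_bijection g ->
       Phi (fun x => f (g x)) = (fun a => Phi f (Phi g a))) /\
    (forall f g, is_bijection f -> is_bijection g -> Phi f = Phi g -> f = g) /\
    (forall phi, is_automorphism phi -> exists f, is_bijection f /\ Phi f = phi).
Proof.
  exists Phi. split; [|split; [|split]].
  - intros f Hf. pose proof Hf as [g [H1 H2]].
    assert (Hg : is_bijection g) by (exists f; split; auto).
    split.
    + exists (Phi g). split; intro a; apply PI_ext; intros A B; rewrite !Phi_spec by auto; cbv beta.
      * replace (fun x => A (g (f x))) with A by (extensionality x; rewrite H1; auto).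
        replace (fun x => B (g (f x))) with B by (extensionality x; rewrite H1; auto). tauto.
      * replace (fun x => A (f (g x))) with A by (extensionality x; rewrite H2; auto).
        replace (fun x => B (f (g x))) with B by (extensionality x; rewrite H2; auto). tauto.
    + intros a b. apply PI_ext; intros A D. rewrite Phi_spec, !hasline_comp by auto. split.
      * intros [B [K1 K2]]. exists (fun y => B (g y)). rewrite !Phi_spec by auto; cbv beta.
        replace (fun x => B (g (f x))) with B by (extensionality x; rewrite H1; auto). auto.
      * intros [B [K1 K2]]. rewrite Phi_spec in K1, K2 by auto. exists (fun x => B (f x)). auto.
  - intros f g Hf Hg.
    assert (Hfg : is_bijection (fun x => f (g x))).
    { destruct Hf as [f' [F1 F2]], Hg as [g' [G1 G2]]. exists (fun y => g' (f' y)).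
      split; intros; rewrite ?F1, ?G1, ?G2, ?F2; reflexivity. }
    extensionality a. apply PI_ext; intros A B. rewrite !Phi_spec by auto. reflexivity.
  - intros f g Hf Hg E. extensionality x. pose proof Hf as [f' [F1 F2]].
    assert (K : hasline (Phi f (Sg x)) (single (f x)) (single (f x))).
    { rewrite Phi_spec by auto. unfold Sg.
      assert (Ex : (fun z => single (f x) (f z)) = single x).
      { apply pred_eq; intro z; unfold single; split.
        - intro Ez. rewrite <- (F1 z), Ez, F1. reflexivity.
        - intros ->; reflexivity. }
      rewrite Ex. apply hasline_L. repeat split; apply single_ne. }
    rewrite E, Phi_spec in K by auto. unfold Sg in K. apply hasline_L in K.
    destruct K as [_ [_ [K _]]]. pose proof (equal_f K x) as K'. cbv beta in K'.
    unfold single in K'. symmetry. rewrite K'. reflexivity.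
  - apply surj_part.
Qed.
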